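(* Let $R=k\{x_1,\ldots,x_n;\,Q,\preceq\}$ be a PBW algebra, $M_1,\ldots,M_r$ $R$-subbimodules of $R^s$ with $M_i={}_R\langle\mathbf f^i_1,\ldots,\mathbf f^i_{t_i}\rangle_R$, and $H$ the block matrix whose first $s$ rows form $(I_s\ \cdots\ I_s)$ ($r$ copies) followed, for $i=1,\ldots,r$, by the rows $(\mathbf0,\ldots,\mathbf f^i_l,\ldots,\mathbf0)$ ($\mathbf f^i_l$ in the $i$-th block of $s$ columns), $l=1,\ldots,t_i$. Suppose $\mathrm{Syz}(H)={}_R\langle\mathbf g_1,\ldots,\mathbf g_t\rangle_R$ with $\mathbf g_k=(\mathbf g_k',\mathbf g_k'')\in(R^{\rm env})^s\times(R^{\rm env})^{\sum_jt_j}$. Then $\bigcap_{i=1}^rM_i={}_R\langle\mathfrak m^s(\mathbf g_1'),\ldots,\mathfrak m^s(\mathbf g_t')\rangle_R$. If moreover $\{\mathbf g_1,\ldots,\mathbf g_t\}$ is a left Gröbner basis of the left $R^{\rm env}$-module $\mathrm{Syz}(H)$ with respect to POT on $(R^{\rm env})^{s+\sum_jt_j}$ (built from any one of $\preceq^*,\preceq^c,\preceq_*,\preceq_c$), then $\{\mathfrak m^s(\mathbf g_1'),\ldots,\mathfrak m^s(\mathbf g_t')\}\setminus\{0\}$ is a two-sided Gröbner basis of $\bigcap_{i=1}^rM_i$ with respect to POT on $R^s$.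
   Context: $k$ is a field; $x^\alpha=x_1^{\alpha_1}\cdots x_n^{\alpha_n}$. A PBW algebra $R=k\{x_1,\ldots,x_n;Q,\preceq\}$ is a quotient of $k\langle x_1,\ldots,x_n\rangle$ by the two-sided ideal generated by $Q=\{x_jx_i-q_{ji}x_ix_j-p_{ji};\,i<j\}$, $q_{ji}\in k^*$, each $p_{ji}$ a combination of standard monomials with exponents $\prec\epsilon_i+\epsilon_j$ for an admissible order $\preceq$ (total, compatible with addition, $0$ minimal), such that the standard monomials form a $k$-basis. $R^{\rm env}=R\otimes_kR^{\rm op}$ is the PBW algebra in the variables $x_1\otimes1,\ldots,x_n\otimes1,1\otimes x_n,\ldots,1\otimes x_1$ (in this order); exponent $(\alpha,\beta)\in\mathbb N^{2n}$ corresponds to $x^\alpha\otimes x^{\beta^{\rm op}}$, $\beta^{\rm op}=(\beta_n,\ldots,\beta_1)$. With $\alpha\preceq^{\rm op}\beta$ iff $\alpha^{\rm op}\preceq\beta^{\rm op}$: $(\alpha,\beta)\prec^*(\gamma,\delta)$ iff $\beta\prec^{\rm op}\delta$ or ($\beta=\delta$, $\alpha\prec\gamma$); $(\alpha,\beta)\prec_*(\gamma,\delta)$ iff $\alpha\prec\gamma$ or ($\alpha=\gamma$, $\beta\prec^{\rm op}\delta$); $(\alpha,\beta)\prec^c(\gamma,\delta)$ iff $\alpha+\beta^{\rm op}\prec\gamma+\delta^{\rm op}$ or (equality and $\beta^{\rm op}\prec\delta^{\rm op}$); $(\alpha,\beta)\prec_c(\gamma,\delta)$ iff $\alpha+\beta^{\rm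 op}\prec\gamma+\delta^{\rm op}$ or (equality and $\alpha\prec\gamma$). For an admissible order $\le$ on $\mathbb N^m$, POT on $\mathbb N^m\times\{1,\ldots,s\}$ is: $(\alpha,i)<(\beta,j)$ iff $i>j$, or $i=j$ and $\alpha<\beta$. For $A=R$ or $R^{\rm env}$, a nonzero $\mathbf f=\sum c_{(\alpha,i)}x^\alpha\mathbf e_i\in A^s$ has $\exp(\mathbf f)$ the largest index with nonzero coefficient; $\mathrm{Exp}(L)=\{\exp(\mathbf f):0\ne\mathbf f\in L\}$; $(\alpha,i)+\mathbb N^m=\{(\alpha+\gamma,i)\}$. A finite $G\subseteq L\setminus\{0\}$ is a left Gröbner basis of a left submodule $L\subseteq A^s$ if $L={}_A\langle G\rangle$ and $\mathrm{Exp}(L)=\bigcup_{\mathbf g\in G}(\exp(\mathbf g)+\mathbb N^m)$; a finite $G\subseteq M\setminus\{0\}$ is a two-sided Gröbner basis of an $R$-subbimodule $M\subseteq R^s$ if $M={}_R\langle G\rangle_R$ and $\mathrm{Exp}(M)=\bigcup_{\mathbf g\in G}(\exp(\mathbf g)+\mathbb N^n)$. $R^q$ is a left $R^{\rm env}$-module via $(r\otimes r')\mathbf f=(rf_1r',\ldots,rf_qr')$; each $(R^{\rm env})^m$ is an $R$-bimodule via $r(a\otimes b)r'=ra\otimes br'$ (coinciding with left multiplication by $R^{\rm env}$); ${}_R\langle F\rangle_R$ is the sub-bimodule generated by $F$. $\mathfrak m^s:(R^{\rm env})^s\to R^s$ applies $\mathfrak m(r\otimes r')=rr'$ coordinatewise.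 For a matrix $H\in M_{m\times q}(R)$ with rows $\mathbf r_1,\ldots,\mathbf r_m\in R^q$, $\mathrm{Syz}(H)$ is the kernel of $(R^{\rm env})^m\to R^q$, $(h_1,\ldots,h_m)\mapsto\sum_ih_i\mathbf r_i$. *)

(* Defs.v *)
From HB Require Import structures.
From mathcomp Require Import all_boot all_order all_algebra.
From mathcomp Require Import mpoly.
Set Implicit Arguments. Unset Strict Implicit. Unset Printing Implicit Defensive.
Import Order.TTheory GRing.Theory.
Local Open Scope ring_scope.

Definition admissible (n : nat) (le : rel 'X_{1..n}) : Prop :=
  [/\ reflexive le, antisymmetric le, transitive le, total le &
      ((forall a b c, le a b -> le (mnm_add a c) (mnm_add b c)) /\
       (forall a, le mnm0 a))].

Definition strict (n : nat) (le : rel 'X_{1..n}) : rel 'X_{1..n} :=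
  fun a b => le a b && (a != b).

Definition mop (n : nat) (a : 'X_{1..n}) : 'X_{1..n} :=
  [multinom a (rev_ord i) | i < n].

Definition le_op (n : nat) (le : rel 'X_{1..n}) : rel 'X_{1..n} :=
  fun a b => le (mop a) (mop b).

Definition lpart (n : nat) (m : 'X_{1..n + n}) : 'X_{1..n} :=
  [multinom m (lshift n i) | i < n].
Definition rpart (n : nat) (m : 'X_{1..n + n}) : 'X_{1..n} :=
  [multinom m (rshift n i) | i < n].

Section PBW.
Variables (k : fieldType) (R : algType k) (n : nat).

Definition smono (x : 'I_n -> R) (a : 'X_{1..n}) : R :=
  \prod_(i < n) x i ^+ a i.

Definition sspan (x : 'I_n -> R) (p : {mpoly k[n]}) : R :=
  \sum_(m <- msupp p) p@_m *: smono x m.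

(* R = k{x_1,...,x_n; Q, le}: R is generated by x_1..x_n subject to the
   relations Q, and the standard monomials form a k-basis (the coordinate
   map pbw_coord is the inverse of sspan).  Since the standard monomials
   span R and satisfy Q, R is isomorphic to k<x>/(Q). *)
Record PBW := {
  pbw_x : 'I_n -> R;
  pbw_le : rel 'X_{1..n};
  pbw_coord : R -> {mpoly k[n]};
  pbw_admissible : admissible pbw_le;
  pbw_coordK : cancel pbw_coord (sspan pbw_x);
  pbw_spanK : cancel (sspan pbw_x) pbw_coord;
  pbw_rel : exists (q : 'I_n -> 'I_n -> k) (p : 'I_n -> 'I_n -> {mpoly k[n]}),
    forall i j : 'I_n, (i < j)%N ->
      [/\ q j i != 0,
          pbw_x j * pbw_x i = q j i *: (pbw_x i * pbw_x j) + sspan pbw_x (p j i) &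
          forall m, m \in msupp (p j i) ->
            strict pbw_le m (mnm_add (mnm1 i) (mnm1 j))]
}.

End PBW.

(* E is a k-algebra with an algebra morphism lam : R -> E (r |-> r(x)1)
   and an anti-morphism rho : R -> E (r |-> 1(x)r) with commuting images,
   such that the elements lam(x^alpha) rho(x^{beta^op}), (alpha,beta) in
   N^{2n}, form a k-basis of E (with coordinate map env_coord).  This
   determines E up to isomorphism as R (x)_k R^op, with the exponent
   (alpha,beta) corresponding to x^alpha (x) x^{beta^op}. *)

Section Env.
Variables (k : fieldType) (R : algType k) (n : nat) (P : PBW R n).

Definition env_basis (E : algType k) (lam rho : R -> E) (m : 'X_{1..n + n}) : E :=
  lam (smono (pbw_x P) (lpart m)) * rho (smono (pbw_x P) (mop (rpart m))).

Definition env_span (E : algType k) (lam rho : R -> E) (p : {mpoly k[n + n]}) : E :=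
  \sum_(m <- msupp p) p@_m *: env_basis lam rho m.

Record Envelope (E : algType k) := {
  env_l : R -> E;
  env_r : R -> E;
  env_coord : E -> {mpoly k[n + n]};
  env_l_add : forall a b, env_l (a + b) = env_l a + env_l b;
  env_l_scale : forall (c : k) a, env_l (c *: a) = c *: env_l a;
  env_l_mul : forall a b, env_l (a * b) = env_l a * env_l b;
  env_l_one : env_l 1 = 1;
  env_r_add : forall a b, env_r (a + b) = env_r a + env_r b;
  env_r_scale : forall (c : k) a, env_r (c *: a) = c *: env_r a;
  env_r_mul : forall a b, env_r (a * b) = env_r b * env_r a;
  env_r_one : env_r 1 = 1;
  env_comm : forall a b, env_l a * env_r b = env_r b * env_l a;
  env_coordK : cancel env_coord (env_span env_l env_r);
  env_spanK : cancel (env_span env_l env_r) env_coord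
}.

Variables (E : algType k) (Env : Envelope E).

(* left R^env-module structure of R^q: (r (x) r') f = (r f_1 r', ..., r f_q r') *)
Definition env_act (q : nat) (h : E) (f : 'rV[R]_q) : 'rV[R]_q :=
  \sum_(m <- msupp (env_coord Env h))
     map_mx (fun z => (env_coord Env h)@_m *:
                (smono (pbw_x P) (lpart m) * z
                 * smono (pbw_x P) (mop (rpart m)))) f.

(* the multiplication map m : R^env -> R, r (x) r' |-> r r' *)
Definition env_mul (h : E) : R :=
  \sum_(m <- msupp (env_coord Env h))
     (env_coord Env h)@_m *:
       (smono (pbw_x P) (lpart m) * smono (pbw_x P) (mop (rpart m))).

Definition env_mul_vec (s : nat) (v : 'rV[E]_s) : 'rV[R]_s := map_mx env_mul v.

(* R-bimodule structure on (R^env)^m: r (a (x) b) r' = ra (x) br',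
   i.e. left multiplication by r (x) r' *)
Definition env_biact (m : nat) (a : R) (v : 'rV[E]_m) (b : R) : 'rV[E]_m :=
  (env_l Env a * env_r Env b) *: v.

Definition Syz (m q : nat) (H : 'M[R]_(m, q)) (h : 'rV[E]_m) : Prop :=
  \sum_(i < m) env_act (h 0 i) (row i H) = 0.

End Env.

Definition lspan (A : pzRingType) (m : nat) (G : seq 'rV[A]_m) (v : 'rV[A]_m) : Prop :=
  exists c : 'I_(size G) -> A, v = \sum_(j < size G) c j *: G`_j.

Definition bispan (R : Type) (V : zmodType) (biact : R -> V -> R -> V)
    (G : seq V) (v : V) : Prop :=
  exists (N : nat) (a b : 'I_N -> R) (idx : 'I_N -> 'I_(size G)),
    v = \sum_(j < N) biact (a j) G`_(idx j) (b j).

Definition rbiact (R : pzRingType) (s : nat) (a : R) (v : 'rV[R]_s) (b : R) : 'rV[R]_s :=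
  map_mx (fun z => a * z * b) v.

Section Groebner.
Variables (k : fieldType) (A : pzRingType) (N : nat).
Variable (coord : A -> {mpoly k[N]}).   (* coordinates in the PBW basis of A *)
Variable (le : rel 'X_{1..N}).

Definition pot_le (m : nat) (e e' : 'X_{1..N} * 'I_m) : bool :=
  (e'.2 < e.2)%N || ((e.2 == e'.2) && le e.1 e'.1).

Definition vcoef (m : nat) (v : 'rV[A]_m) (e : 'X_{1..N} * 'I_m) : k :=
  (coord (v 0 e.2))@_(e.1).

Definition is_exp (m : nat) (v : 'rV[A]_m) (e : 'X_{1..N} * 'I_m) : Prop :=
  vcoef v e != 0 /\ forall e', vcoef v e' != 0 -> pot_le e' e.

Definition Exp (m : nat) (L : 'rV[A]_m -> Prop) (e : 'X_{1..N} * 'I_m) : Prop :=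
  exists v, [/\ L v, v != 0 & is_exp v e].

Definition in_exp_cone (m : nat) (G : seq 'rV[A]_m) (e : 'X_{1..N} * 'I_m) : Prop :=
  exists2 g, g \in G & exists e0, is_exp g e0 /\
    e.2 = e0.2 /\ exists c : 'X_{1..N}, e.1 = mnm_add e0.1 c.

Definition left_GB (m : nat) (L : 'rV[A]_m -> Prop) (G : seq 'rV[A]_m) : Prop :=
  [/\ forall g, g \in G -> L g /\ g != 0,
      forall v, L v <-> lspan G v &
      forall e, Exp L e <-> in_exp_cone G e].

Definition twosided_GB (m : nat) (biact : A -> 'rV[A]_m -> A -> 'rV[A]_m)
    (L : 'rV[A]_m -> Prop) (G : seq 'rV[A]_m) : Prop :=
  [/\ forall g, g \in G -> L g /\ g != 0,
      forall v, L v <-> bispan biact G v &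
      forall e, Exp L e <-> in_exp_cone G e].

End Groebner.

Inductive env_order_kind := Ord_star | Ord_c | Ord_lstar | Ord_lc.

Definition env_order (n : nat) (le : rel 'X_{1..n}) (o : env_order_kind)
    : rel 'X_{1..n + n} :=
  fun m m' =>
    let a := lpart m in let b := rpart m in
    let c := lpart m' in let d := rpart m' in
    match o with
    | Ord_star => strict (le_op le) b d || ((b == d) && le a c)
    | Ord_lstar => strict le a c || ((a == c) && le_op le b d)
    | Ord_c => strict le (mnm_add a (mop b)) (mnm_add c (mop d))
               || ((mnm_add a (mop b) == mnm_add c (mop d)) && le (mop b) (mop d))
    | Ord_lc => strict le (mnm_add a (mop b)) (mnm_add c (mop d))
               || ((mnm_add a (mop b) == mnm_add c (mop d)) && le a c)
    end.

Section BlockH.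
Variables (R : pzRingType) (s r : nat) (t : 'I_r -> nat).
Variable (f : forall i : 'I_r, 'I_(t i) -> 'rV[R]_s).

(* columns of H are indexed by r blocks of s columns: R^(r*s) = mxvec of r x s *)
Definition H_top : 'M[R]_(s, r * s) :=
  \matrix_(j < s) mxvec (\matrix_(i' < r, j' < s) (j' == j)%:R).

Definition H_block (i : 'I_r) : 'M[R]_(t i, r * s) :=
  \matrix_(l < t i) mxvec (\matrix_(i' < r, j' < s) if i' == i then @f i l 0 j' else 0).

Definition H_mat : 'M[R]_(s + \sum_i t i, r * s) :=
  col_mx H_top (mxcol H_block).

End BlockH.

Arguments env_biact {k R n P E} Env {m} a v b.
Arguments rbiact {R s} a v b.

(* Main.v *)
Require Import Defs.
From HB Require Import structures.
From mathcomp Require Import all_boot all_order all_algebra.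
From mathcomp Require Import mpoly.
From Stdlib Require Import Classical IndefiniteDescription.
Set Implicit Arguments. Unset Strict Implicit. Unset Printing Implicit Defensive.
Import GRing.Theory.
Local Open Scope ring_scope.

Section Lin.
Variables (k : fieldType) (N : nat) (V : lmodType k).
Implicit Types (p q : {mpoly k[N]}) (F : 'X_{1..N} -> V).

Definition lin F p : V := \sum_(m <- msupp p) p@_m *: F m.

Lemma lin_sub F p (S : seq 'X_{1..N}) : uniq S -> {subset msupp p <= S} ->
  lin F p = \sum_(m <- S) p@_m *: F m.
Proof.
move=> uS sub; rewrite /lin [RHS](bigID (fun m => m \in msupp p)) /=.
rewrite [X in _ + X]big1 ?addr0; last first.
  by move=> m /memN_msupp_eq0 ->; rewrite scale0r.
rewrite -[RHS]big_filter; apply: perm_big; apply: uniq_perm.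
- exact: msupp_uniq.
- exact: filter_uniq.
move=> m; rewrite mem_filter; case E: (m \in msupp p) => //=.
by rewrite (sub _ E).
Qed.

Lemma linD F p q : lin F (p + q) = lin F p + lin F q.
Proof.
set S := undup (msupp p ++ msupp q).
have uS : uniq S by exact: undup_uniq.
rewrite (@lin_sub F (p + q) S) // ?(@lin_sub F p S) ?(@lin_sub F q S) //.
- by rewrite -big_split /=; apply: eq_bigr => m _; rewrite mcoeffD scalerDl.
- by move=> m hm; rewrite mem_undup mem_cat hm orbT.
- by move=> m hm; rewrite mem_undup mem_cat hm.
- by move=> m /msuppD_le; rewrite mem_undup.
Qed.

Lemma linZ F c p : lin F (c *: p) = c *: lin F p.
Proof.
rewrite (@lin_sub F (c *: p) (msupp p)) ?msupp_uniq //; last exact: msuppZ_le.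
by rewrite /lin scaler_sumr; apply: eq_bigr => m _; rewrite mcoeffZ scalerA.
Qed.

Lemma lin0 F : lin F 0 = 0.
Proof. by rewrite /lin msupp0 big_nil. Qed.

Lemma linX F m : lin F 'X_[m] = F m.
Proof. by rewrite /lin msuppX big_seq1 mcoeffX eqxx scale1r. Qed.

Lemma linN F p : lin F (- p) = - lin F p.
Proof. by rewrite -(scaleN1r p) linZ scaleN1r. Qed.

Lemma lin_sum F (I : Type) (r : seq I) (P : pred I) (G : I -> {mpoly k[N]}) :
  lin F (\sum_(i <- r | P i) G i) = \sum_(i <- r | P i) lin F (G i).
Proof. exact: (big_morph (lin F) (linD F) (lin0 F)). Qed.

Lemma lin_ext F1 F2 p : (forall m, m \in msupp p -> F1 m = F2 m) -> lin F1 p = lin F2 p.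
Proof. by move=> h; rewrite /lin big_seq_cond [RHS]big_seq_cond; apply: eq_bigr => m /andP[/h ->]. Qed.

End Lin.

Section WF.

Lemma nat_min_exists (h : nat -> nat) (M : nat) :
  exists i, (M <= i)%N /\ forall j, (M <= j)%N -> (h i <= h j)%N.
Proof.
apply: NNPP => H.
suff : forall v, forall i, (M <= i)%N -> h i <> v.
  by move=> /(_ (h M) M (leqnn _)).
elim/ltn_ind => v IH i Mi hiv; apply: H; exists i; split=> // j Mj.
rewrite leqNgt; apply/negP => lt; apply: (IH (h j)) Mj erefl.
by rewrite -hiv.
Qed.

Lemma nat_mono_sub (h : nat -> nat) :
  exists g : nat -> nat, (forall i, (g i < g i.+1)%N) /\
    forall i j, (i <= j)%N -> (h (g i) <= h (g j))%N.
Proof.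
have [am Ham] : { am : nat -> nat | forall M, (M <= am M)%N /\
    forall j, (M <= j)%N -> (h (am M) <= h j)%N }.
  apply: constructive_indefinite_description.
  pose H := fun M => constructive_indefinite_description _ (nat_min_exists h M).
  by exists (fun M => proj1_sig (H M)) => M; exact: (proj2_sig (H M)).
pose g := fix g i := if i is i'.+1 then am (g i').+1 else am 0.
exists g; split.
  by move=> i /=; case: (Ham (g i).+1).
have step : forall i, (h (g i) <= h (g i.+1))%N.
  case=> [|i] /=; first by case: (Ham 0) => _; apply; case: (Ham 1).
  case: (Ham (g i).+1) => hi1 H1; apply: H1.
  case: (Ham (am (g i).+1).+1) => H2 _; apply: leq_trans H2; exact: leqW.
move=> i j /subnK <-; elim: (j - i)%N => // d IH.
by rewrite addSn; apply: leq_trans IH (step _).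
Qed.

Variable n : nat.

Lemma dickson (f : nat -> 'X_{1..n}) : exists i j, (i < j)%N /\ (f i <= f j)%MM.
Proof.
suff : forall c, (c <= n)%N -> exists g : nat -> nat, (forall i, (g i < g i.+1)%N) /\
    forall (x : 'I_n) i j, (x < c)%N -> (i <= j)%N -> (f (g i) x <= f (g j) x)%N.
  move=> /(_ n (leqnn _)) [g [gi gm]]; exists (g 0), (g 1); split; first exact: gi.
  by apply/mnm_lepP => x; apply: gm.
elim=> [|c IH] cn.
  by exists id; split=> // x.
have [g [gi gm]] := IH (ltnW cn).
have [g2 [g2i g2m]] := nat_mono_sub (fun i => f (g i) (Ordinal cn)).
have ginc : forall i j, (i <= j)%N -> (g i <= g j)%N.
  move=> i j /subnK <-; elim: (j - i)%N => // d IHd.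
  by rewrite addSn; apply: leq_trans IHd (ltnW (gi _)).
exists (fun i => g (g2 i)); split; first by move=> i; apply: (leq_trans (gi _)); apply: ginc; exact: g2i.
move=> x i j; rewrite ltnS leq_eqVlt => /orP[/eqP xc|xc] ij.
  have -> : x = Ordinal cn by apply: val_inj.
  exact: g2m.
apply: gm => //.
move: ij => /subnK <-; elim: (j - i)%N => // d IHd.
by rewrite addSn; apply: leq_trans IHd (ltnW (g2i _)).
Qed.

Variable le : rel 'X_{1..n}.
Hypothesis adm : admissible le.

Lemma adm_refl : reflexive le. Proof. by case: adm. Qed.
Lemma adm_anti : antisymmetric le. Proof. by case: adm. Qed.
Lemma adm_trans : transitive le. Proof. by case: adm. Qed.
Lemma adm_total : total le. Proof. by case: adm. Qed.
Lemma adm_add a b c : le a b -> le (a + c)%MM (b + c)%MM.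
Proof. by case: adm => _ _ _ _ [h _]; apply: h. Qed.
Lemma adm_0 a : le 0%MM a.
Proof. by case: adm => _ _ _ _ [_ h]; apply: h. Qed.

Lemma adm_addl a b c : le a b -> le (c + a)%MM (c + b)%MM.
Proof. by move=> h; rewrite ![(c + _)%MM]addmC; apply: adm_add. Qed.

Lemma adm_lem a b : (a <= b)%MM -> le a b.
Proof.
move=> h; rewrite -(submK h) -{1}(add0m a); apply: adm_add; exact: adm_0.
Qed.

Lemma adm_wf : well_founded (strict le).
Proof.
move=> a; apply: NNPP => na.
have step : forall x, exists y, ~ Acc (strict le) x -> strict le y x /\ ~ Acc (strict le) y.
  move=> x; case: (classic (Acc (strict le) x)) => hx; first by exists x.
  apply: NNPP => H; apply: hx; constructor => y hy; apply: NNPP => ny.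
  by apply: H; exists y => _.
have [st Hst] : { st : 'X_{1..n} -> 'X_{1..n} | forall x, ~ Acc (strict le) x -> strict le (st x) x /\ ~ Acc (strict le) (st x) }.
  apply: constructive_indefinite_description.
  exists (fun x => proj1_sig (constructive_indefinite_description _ (step x))).
  by move=> x; exact: (proj2_sig (constructive_indefinite_description _ (step x))).
pose f i := iter i st a.
have nf : forall i, ~ Acc (strict le) (f i) by elim=> [|i IH] //=; case: (Hst _ IH).
have sf : forall i, strict le (f i.+1) (f i) by move=> i; case: (Hst _ (nf i)).
have [i [j [ij lij]]] := dickson f.
have : strict le (f j) (f i).
  move: ij => /subnK <-; elim: (j - i.+1)%N => [|d IHd]; first by rewrite add0n; exact: sf.
  rewrite addSn; move: (sf (d + i.+1)%N) IHd => /andP [h1 h2] /andP [h3 h4].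
  apply/andP; split; first exact: adm_trans h3.
  apply/negP => /eqP e; move: h3; rewrite -e => h3.
  by move: h2; rewrite (@adm_anti (f (d + i.+1)%N) (f (d + i.+1).+1)) ?h1 ?h3 ?eqxx.
case/andP => h1 h2; move: h2; rewrite (@adm_anti (f j) (f i)) ?eqxx //.
by rewrite h1 adm_lem.
Qed.

End WF.


Section PBWlem.
Variables (k : fieldType) (R : algType k) (n : nat) (P : PBW R n).
Local Notation x := (pbw_x P).
Local Notation le := (pbw_le P).
Local Notation coord := (pbw_coord P).
Local Notation lt := (strict le).
Let adm := pbw_admissible P.
Let Ltrans : transitive le := adm_trans adm.
Let Lanti : antisymmetric le := adm_anti adm.
Let Ladd a b c : le a b -> le (a + c)%MM (b + c)%MM := @adm_add _ _ adm a b c.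
Let Laddl a b c : le a b -> le (c + a)%MM (c + b)%MM := @adm_addl _ _ adm a b c.
Let L0 a : le 0%MM a := adm_0 adm a.

Lemma coordK r : sspan x (coord r) = r. Proof. exact: pbw_coordK. Qed.
Lemma spanK p : coord (sspan x p) = p. Proof. exact: pbw_spanK. Qed.

Lemma sspan_lin p : sspan x p = lin (smono x) p. Proof. by []. Qed.

Lemma coordD a b : coord (a + b) = coord a + coord b.
Proof. by apply: (can_inj spanK); rewrite !sspan_lin linD -!sspan_lin !coordK. Qed.
Lemma coordZ c a : coord (c *: a) = c *: coord a.
Proof. by apply: (can_inj spanK); rewrite !sspan_lin linZ -!sspan_lin !coordK. Qed.
Lemma coord0 : coord 0 = 0.
Proof. by apply: (can_inj spanK); rewrite !sspan_lin lin0 -!sspan_lin !coordK. Qed.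
Lemma coordN a : coord (- a) = - coord a.
Proof. by rewrite -scaleN1r coordZ scaleN1r. Qed.
Lemma coordB a b : coord (a - b) = coord a - coord b.
Proof. by rewrite coordD coordN. Qed.
Lemma coord_sum (I : Type) (r : seq I) (Q : pred I) (F : I -> R) :
  coord (\sum_(i <- r | Q i) F i) = \sum_(i <- r | Q i) coord (F i).
Proof. exact: (big_morph coord coordD coord0). Qed.
Lemma coord_smono m : coord (smono x m) = 'X_[m].
Proof. by rewrite -(linX (smono x) m) -sspan_lin spanK. Qed.
Lemma coord_eq0 a : coord a = 0 -> a = 0.
Proof. by move=> h; rewrite -(coordK a) h sspan_lin lin0. Qed.

Lemma expand r : r = \sum_(m <- msupp (coord r)) (coord r)@_m *: smono x m.
Proof. by rewrite -{1}(coordK r). Qed.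

Lemma ltW a b : lt a b -> le a b. Proof. by case/andP. Qed.
Lemma lt_le_trans a b c : lt a b -> le b c -> lt a c.
Proof.
case/andP=> ab nab bc; apply/andP; split; first exact: Ltrans ab bc.
apply/eqP=> e; move: nab; rewrite e in ab *.
by rewrite (@Lanti b c) ?ab ?bc ?eqxx.
Qed.
Lemma le_lt_trans a b c : le a b -> lt b c -> lt a c.
Proof.
move=> ab /andP[bc nbc]; apply/andP; split; first exact: Ltrans ab bc.
apply/eqP=> e; move: nbc; rewrite -e in bc *.
by rewrite (@Lanti b a) ?ab ?bc ?eqxx.
Qed.
Lemma lt_addr a b c : lt a b -> lt (a + c)%MM (b + c)%MM.
Proof. by case/andP=> h1 h2; rewrite /strict Ladd // eqm_add2r h2. Qed.
Lemma lt_addl a b c : lt a b -> lt (c + a)%MM (c + b)%MM.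
Proof. by move=> h; rewrite ![(c + _)%MM]addmC; apply: lt_addr. Qed.
Lemma le_addr a b c : le a b -> le (a + c)%MM (b + c)%MM. Proof. exact: Ladd. Qed.
Lemma le_addl a b c : le a b -> le (c + a)%MM (c + b)%MM. Proof. exact: Laddl. Qed.
Lemma lt_U i a : lt a (U_(i) + a)%MM.
Proof.
apply/andP; split; first by rewrite -{1}(add0m a); apply: Ladd; apply: L0.
apply/eqP => e; have : (U_(i) + a == 0 + a)%MM by rewrite -e add0m.
by rewrite eqm_add2r mnm1_eq0.
Qed.
Lemma le_refl a : le a a. Proof. exact: (adm_refl adm). Qed.

Definition Le D r := forall m, m \in msupp (coord r) -> le m D.
Definition Lt D r := forall m, m \in msupp (coord r) -> lt m D.
Definition lead D r := (coord r)@_D != 0 /\ Le D r.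

Lemma Lt0 D : Lt D 0. Proof. by move=> m; rewrite coord0 msupp0. Qed.
Lemma LtD D a b : Lt D a -> Lt D b -> Lt D (a + b).
Proof. by move=> ha hb m; rewrite coordD => /msuppD_le; rewrite mem_cat => /orP[/ha|/hb]. Qed.
Lemma LtZ D c a : Lt D a -> Lt D (c *: a).
Proof. by move=> ha m; rewrite coordZ => /msuppZ_le /ha. Qed.
Lemma LtN D a : Lt D a -> Lt D (- a).
Proof. by move=> h; rewrite -scaleN1r; apply: LtZ. Qed.
Lemma Lt_sum D (I : Type) (r : seq I) (Q : pred I) (F : I -> R) :
  (forall i, Q i -> Lt D (F i)) -> Lt D (\sum_(i <- r | Q i) F i).
Proof. by move=> h; apply: big_ind => //; [exact: Lt0|exact: LtD]. Qed.
Lemma Le_Lt D1 D r : Le D1 r -> lt D1 D -> Lt D r.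
Proof. by move=> h h2 m /h hm; apply: le_lt_trans hm h2. Qed.
Lemma Lt_Le D r : Lt D r -> Le D r.
Proof. by move=> h m /h /ltW. Qed.
Lemma Lt_coef D r : Lt D r -> (coord r)@_D = 0.
Proof.
move=> h; apply/eqP; rewrite mcoeff_eq0; apply/negP => /h.
by rewrite /strict eqxx andbF.
Qed.
Lemma lead_smono D : lead D (smono x D).
Proof.
rewrite /lead coord_smono mcoeffX eqxx oner_neq0; split=> // m.
by rewrite coord_smono msuppX inE => /eqP ->; exact: le_refl.
Qed.
Lemma lead_split D r : lead D r -> Lt D (r - (coord r)@_D *: smono x D).
Proof.
case=> _ h m; rewrite coordB coordZ coord_smono mcoeff_msupp mcoeffB mcoeffZ mcoeffX.
have [->|ne] := eqVneq D m; first by rewrite mulr1 subrr eqxx.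
rewrite mulr0 subr0 -mcoeff_msupp => /h hm; by rewrite /strict hm eq_sym ne.
Qed.
Lemma lead_add D a b : lead D a -> Lt D b -> lead D (a + b).
Proof.
case=> ha1 ha2 hb; split; first by rewrite coordD mcoeffD (Lt_coef hb) addr0.
move=> m; rewrite coordD => /msuppD_le; rewrite mem_cat => /orP[/ha2 //|/hb /ltW //].
Qed.
Lemma leadZ D c a : c != 0 -> lead D a -> lead D (c *: a).
Proof.
move=> c0 [h1 h2]; split; first by rewrite coordZ mcoeffZ mulf_neq0.
by move=> m; rewrite coordZ => /msuppZ_le /h2.
Qed.
Lemma lead_decomp D r : lead D r ->
  exists2 c, c != 0 & exists2 r', Lt D r' & r = c *: smono x D + r'.
Proof.
move=> h; exists ((coord r)@_D); first by case: h.
by exists (r - (coord r)@_D *: smono x D); [exact: lead_split|rewrite addrC subrK].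
Qed.

Lemma Lt_expand (r : R) (D1 D : 'X_{1..n}) (phi : R -> R) (sh : 'X_{1..n} -> 'X_{1..n}) :
  {morph phi : a b / a + b} -> (forall c a, phi (c *: a) = c *: phi a) -> phi 0 = 0 ->
  (forall m, lt m D1 -> Le (sh m) (phi (smono x m)) /\ lt (sh m) D) ->
  Lt D1 r -> Lt D (phi r).
Proof.
move=> hD hZ h0 hm hr; rewrite (expand r) (big_morph phi hD h0).
rewrite big_seq; apply: Lt_sum => m /hr /hm [h1 h2]; rewrite hZ; apply: LtZ.
exact: Le_Lt h1 h2.
Qed.

Lemma smono0 : smono x 0%MM = 1.
Proof. by rewrite /smono big1 // => i _; rewrite mnm0E expr0. Qed.

Lemma enum_filter_ge (i : 'I_n) :
  [seq j : 'I_n <- enum 'I_n | (i <= j)%N] = i :: [seq j : 'I_n <- enum 'I_n | (i < j)%N].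
Proof.
have fm : forall (Q : pred nat), map val [seq j : 'I_n <- enum 'I_n | Q j] = [seq m <- iota 0 n | Q m].
  by move=> Q; rewrite -val_enum_ord filter_map.
apply: (inj_map val_inj); rewrite /= !fm.
move: (nat_of_ord i) (ltn_ord i) => i0 hi.
have F : forall a m, (a <= m)%N -> [seq j <- iota 0 m | (a <= j)%N] = iota a (m - a).
  move=> a m am; rewrite -{1}(subnKC am) iotaD filter_cat add0n.
  have -> : [seq j <- iota 0 a | (a <= j)%N] = [::].
    apply/eqP; rewrite -(negbK (_ == _)) -has_filter; apply/hasPn => j.
    by rewrite mem_iota add0n => /andP[_ ja]; rewrite leqNgt ja.
  by apply/all_filterP/allP => j; rewrite mem_iota => /andP[].
rewrite F ?(ltnW hi) //.
have -> : [seq j <- iota 0 n | (i0 < j)%N] = iota i0.+1 (n - i0.+1) by rewrite -F.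
by rewrite -(subnSK hi).
Qed.

Lemma smono_split (i : 'I_n) (c : 'X_{1..n}) : (forall j : 'I_n, (j < i)%N -> c j = 0%N) ->
  smono x c = x i ^+ c i * \prod_(j <- [seq j : 'I_n <- enum 'I_n | (i < j)%N]) x j ^+ c j.
Proof.
move=> h; rewrite /smono.
transitivity (\prod_(j <- i :: [seq j : 'I_n <- enum 'I_n | (i < j)%N]) x j ^+ c j); last by rewrite big_cons.
rewrite -enum_filter_ge big_filter big_mkcond /=.
rewrite [LHS](_ : _ = \prod_(j <- enum 'I_n) x j ^+ c j); last by rewrite enumT.
rewrite [RHS]big_mkcond; apply: eq_bigr => j _.
by case: leqP => // /h ->; rewrite expr0.
Qed.

Lemma smono_ext (i : 'I_n) (c : 'X_{1..n}) : (forall j : 'I_n, (j < i)%N -> c j = 0%N) ->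
  x i * smono x c = smono x (U_(i) + c)%MM.
Proof.
move=> h; rewrite (smono_split h) (@smono_split i); last first.
  by move=> j ji; rewrite mnmDE mnm1E h // eq_sym; case: eqP => // e; move: ji; rewrite e ltnn.
rewrite mnmDE mnm1E eqxx add1n exprS mulrA; congr (_ * _).
apply: eq_big_seq => j; rewrite mem_filter => /andP[ij _].
by rewrite mnmDE mnm1E; case: eqP => // e; move: ij; rewrite e ltnn.
Qed.

Lemma smonoU i : smono x U_(i)%MM = x i.
Proof. by rewrite -[U_(i)%MM]addm0 -smono_ext ?smono0 ?mulr1 // => j _; rewrite mnm0E. Qed.

Lemma min_supp (a : 'X_{1..n}) : a != 0%MM ->
  exists i : 'I_n, a i != 0%N /\ forall j : 'I_n, (j < i)%N -> a j = 0%N.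
Proof.
move=> a0; have : exists i : 'I_n, a i != 0%N.
  apply: NNPP => H; move/eqP: a0; apply; apply/mnmP => i; rewrite mnm0E.
  by apply/eqP; apply: NNPP => h; apply: H; exists i; exact/negP.
case=> i0 hi0.
pose Q := fun m : nat => if (m < n)%N =P true is ReflectT mn then a (Ordinal mn) != 0%N else false.
have ex : exists m, Q m.
  by exists i0; rewrite /Q; case: eqP => [mn|]; [rewrite (_ : Ordinal mn = i0) //; apply: val_inj|rewrite ltn_ord].
case: (ex_minnP ex) => m hm hmin.
move: hm; rewrite /Q; case: eqP => // mn hm.
exists (Ordinal mn); split => // j jm; apply/eqP; apply: NNPP => /negP hj.
have : Q j.
  by rewrite /Q; case: eqP => [jn|]; [rewrite (_ : Ordinal jn = j) //; apply: val_inj|rewrite ltn_ord].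
by move/hmin; rewrite leqNgt jm.
Qed.

Lemma smono_decomp (a : 'X_{1..n}) : a != 0%MM ->
  exists i : 'I_n, exists a' : 'X_{1..n}, [/\ a = (U_(i) + a')%MM,
     smono x a = x i * smono x a' & forall j : 'I_n, (j < i)%N -> a' j = 0%N].
Proof.
move=> /min_supp [i [ai hj]]; exists i, (a - U_(i))%MM.
have ea : a = (U_(i) + (a - U_(i)))%MM.
  by rewrite addmC submK //; rewrite lep1mP.
have h' : forall j : 'I_n, (j < i)%N -> (a - U_(i))%MM j = 0%N.
  by move=> j ji; rewrite mnmBE hj.
by split=> //; rewrite smono_ext // -ea.
Qed.

Theorem pbw_mul a b : lead (a + b)%MM (smono x a * smono x b).
Proof.
suff H : forall D a b, (a + b)%MM = D -> lead D (smono x a * smono x b) by exact: H.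
have [q [p Hqp]] := pbw_rel P.
move=> {a b}; elim/(well_founded_induction (adm_wf adm)) => D IH a b eD.
have IHL : forall D' a b, lt D' D -> (a + b)%MM = D' -> Le D' (smono x a * smono x b).
  by move=> D' a' b' h e; case: (IH D' h a' b' e).
have mulxL : forall j D1 r, le (U_(j) + D1)%MM D -> Lt D1 r -> Lt D (x j * r).
  move=> j D1 r hD; apply: (@Lt_expand r D1 D (fun z => x j * z) (fun m => U_(j) + m)%MM).
  - by move=> u v; rewrite mulrDr.
  - by move=> c u; rewrite scalerAr.
  - by rewrite mulr0.
  move=> m hm; have hlt : lt (U_(j) + m)%MM D by apply: lt_le_trans hD; apply: lt_addl.
  by split=> //; rewrite -smonoU; apply: IHL hlt _.
have step1 : forall i c, (U_(i) + c)%MM = D -> lead D (x i * smono x c).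
  move=> i c eD'.
  case: (classic (exists j : 'I_n, (j < i)%N /\ c j != 0%N)) => [hex|hno]; last first.
    rewrite smono_ext -?eD'; first exact: lead_smono.
    move=> j ji; apply/eqP; apply: NNPP => hj; apply: hno; exists j; split=> //; exact/negP.
  have c0 : c != 0%MM.
    by apply/eqP => e; case: hex => j [_]; rewrite e mnm0E.
  have [j0 [c' [ec ec' hc']]] := smono_decomp c0.
  have j0i : (j0 < i)%N.
    rewrite ltnNge; apply/negP => ij0; case: hex => j [ji cj]; move: cj.
    rewrite ec mnmDE mnm1E hc' ?addn0; last by apply: leq_trans ji ij0.
    have nj : j0 != j by apply/eqP => e; move: ji; rewrite -e ltnNge ij0.
    by rewrite (negbTE nj).
  have [qji [rel hp]] := Hqp j0 i j0i.
  rewrite ec' mulrA rel mulrDl -scalerAl -mulrA.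
  have eD2 : D = (U_(j0) + (U_(i) + c'))%MM by rewrite -eD' ec addmA [(U_(i) + U_(j0))%MM]addmC addmA.
  have lt1 : lt (U_(i) + c')%MM D by rewrite eD2; apply: lt_U.
  have [lam lam0 [A' hA' eA]] := lead_decomp (IH _ lt1 (U_(i))%MM c' erefl).
  rewrite -[x i](smonoU i) eA mulrDr -scalerAr smono_ext; last first.
    move=> j jj0; rewrite mnmDE mnm1E hc' // addn0.
    by case: eqP => // e; move: (ltn_trans jj0 j0i); rewrite e ltnn.
  rewrite -eD2 scalerDr scalerA -addrA; apply: lead_add.
    by apply: leadZ; [rewrite mulf_neq0|exact: lead_smono].
  apply: LtD; first by apply: LtZ; apply: (mulxL j0 _ _ _ hA'); rewrite -eD2; exact: le_refl.
  apply: (@Lt_expand (sspan x (p i j0)) (U_(j0) + U_(i))%MM D (fun z => z * smono x c') (fun m => m + c')%MM).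
  - by move=> u v; rewrite mulrDl.
  - by move=> cc u; rewrite scalerAl.
  - by rewrite mul0r.
  - move=> m hm; have hlt : lt (m + c')%MM D.
      by rewrite eD2 addmA; apply: lt_addr.
    by split=> //; apply: IHL hlt _.
  by move=> m; rewrite spanK => /hp.
have [a0|a0] := eqVneq a 0%MM.
  by rewrite -eD a0 smono0 mul1r add0m; exact: lead_smono.
have [j [a' [ea ea' _]]] := smono_decomp a0.
rewrite ea' -mulrA.
have eD2 : D = (U_(j) + (a' + b))%MM by rewrite -eD ea addmA.
have lt1 : lt (a' + b)%MM D by rewrite eD2; apply: lt_U.
have [lam lam0 [A' hA' eA]] := lead_decomp (IH _ lt1 a' b erefl).
rewrite eA mulrDr -scalerAr; apply: lead_add.
  by apply: leadZ => //; apply: step1; rewrite eD2.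
by apply: (mulxL j _ _ _ hA'); rewrite -eD2; exact: le_refl.
Qed.

Lemma lead_mulL c D r : lead D r -> lead (c + D)%MM (smono x c * r).
Proof.
move=> /lead_decomp [lam lam0 [r' hr' ->]].
rewrite mulrDr -scalerAr; apply: lead_add; first by apply: leadZ => //; exact: pbw_mul.
apply: (@Lt_expand r' D (c + D)%MM (fun z => smono x c * z) (fun m => c + m)%MM) => //.
- by move=> u v; rewrite mulrDr.
- by move=> cc u; rewrite scalerAr.
- by rewrite mulr0.
move=> m hm; split; last exact: lt_addl.
by case: (pbw_mul c m).
Qed.

End PBWlem.


Section Multi.
Variable n : nat.
Implicit Types (a b c d : 'X_{1..n}) (m : 'X_{1..n + n}).

Definition join a b : 'X_{1..n + n} :=
  [multinom (match split i with inl i' => a i' | inr i' => b i' end) | i < n + n].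

Lemma split_lshift (i : 'I_n) : split (lshift n i) = inl i.
Proof. exact: (unsplitK (inl i : 'I_n + 'I_n)). Qed.
Lemma split_rshift (i : 'I_n) : split (rshift n i) = inr i.
Proof. exact: (unsplitK (inr i : 'I_n + 'I_n)). Qed.

Lemma lpart_join a b : lpart (join a b) = a.
Proof. by apply/mnmP => i; rewrite /lpart !mnmE split_lshift. Qed.
Lemma rpart_join a b : rpart (join a b) = b.
Proof. by apply/mnmP => i; rewrite /rpart !mnmE split_rshift. Qed.
Lemma join_parts m : join (lpart m) (rpart m) = m.
Proof.
apply/mnmP => i; rewrite /join mnmE; rewrite -[in RHS](splitK i).
by case: (split i) => j; rewrite /lpart /rpart mnmE.
Qed.
Lemma join_inj a b c d : join a b = join c d -> a = c /\ b = d.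
Proof. by move=> e; have := congr1 (@lpart n) e; have := congr1 (@rpart n) e; rewrite !lpart_join !rpart_join. Qed.
Lemma lpartD m1 m2 : lpart (m1 + m2)%MM = (lpart m1 + lpart m2)%MM.
Proof. by apply/mnmP => i; rewrite /lpart !mnmE. Qed.
Lemma rpartD m1 m2 : rpart (m1 + m2)%MM = (rpart m1 + rpart m2)%MM.
Proof. by apply/mnmP => i; rewrite /rpart !mnmE. Qed.
Lemma lpart0 : lpart (0%MM : 'X_{1..n+n}) = 0%MM.
Proof. by apply/mnmP => i; rewrite /lpart !mnmE. Qed.
Lemma rpart0 : rpart (0%MM : 'X_{1..n+n}) = 0%MM.
Proof. by apply/mnmP => i; rewrite /rpart !mnmE. Qed.
Lemma parts_inj m1 m2 : lpart m1 = lpart m2 -> rpart m1 = rpart m2 -> m1 = m2.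
Proof. by move=> h1 h2; rewrite -(join_parts m1) -(join_parts m2) h1 h2. Qed.

Lemma mopK : involutive (@mop n).
Proof. by move=> a; apply/mnmP => i; rewrite /mop !mnmE rev_ordK. Qed.
Lemma mop_inj : injective (@mop n). Proof. exact: inv_inj mopK. Qed.
Lemma mopD a b : mop (a + b)%MM = (mop a + mop b)%MM.
Proof. by apply/mnmP => i; rewrite /mop !mnmE. Qed.
Lemma mop0 : mop 0%MM = 0%MM :> 'X_{1..n}.
Proof. by apply/mnmP => i; rewrite /mop !mnmE. Qed.
Lemma mop_eq0 a : mop a = 0%MM -> a = 0%MM.
Proof. by move=> h; apply: mop_inj; rewrite h mop0. Qed.

End Multi.

Section EnvLem.
Variables (k : fieldType) (R : algType k) (n : nat) (P : PBW R n).
Variables (E : algType k) (Env : Envelope P E).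
Local Notation x := (pbw_x P).
Local Notation coord := (pbw_coord P).
Local Notation lam := (env_l Env).
Local Notation rho := (env_r Env).
Local Notation ecoord := (env_coord Env).
Local Notation basis := (env_basis P lam rho).

Lemma ecoordK h : env_span P lam rho (ecoord h) = h. Proof. exact: env_coordK. Qed.
Lemma espanK p : ecoord (env_span P lam rho p) = p. Proof. exact: env_spanK. Qed.
Lemma espan_lin p : env_span P lam rho p = lin basis p. Proof. by []. Qed.

Lemma ecoordD a b : ecoord (a + b) = ecoord a + ecoord b.
Proof. by apply: (can_inj espanK); rewrite !espan_lin linD -!espan_lin !ecoordK. Qed.
Lemma ecoordZ c a : ecoord (c *: a) = c *: ecoord a.
Proof. by apply: (can_inj espanK); rewrite !espan_lin linZ -!espan_lin !ecoordK. Qed.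
Lemma ecoord0 : ecoord 0 = 0.
Proof. by apply: (can_inj espanK); rewrite !espan_lin lin0 -!espan_lin !ecoordK. Qed.
Lemma ecoordN a : ecoord (- a) = - ecoord a.
Proof. by rewrite -scaleN1r ecoordZ scaleN1r. Qed.
Lemma ecoord_sum (I : Type) (r : seq I) (Q : pred I) (F : I -> E) :
  ecoord (\sum_(i <- r | Q i) F i) = \sum_(i <- r | Q i) ecoord (F i).
Proof. exact: (big_morph ecoord ecoordD ecoord0). Qed.
Lemma ecoord_basis m : ecoord (basis m) = 'X_[m].
Proof. by rewrite -(linX basis m) -espan_lin espanK. Qed.
Lemma ecoord_eq0 a : ecoord a = 0 -> a = 0.
Proof. by move=> h; rewrite -(ecoordK a) h espan_lin lin0. Qed.

Lemma lam0 : lam 0 = 0.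
Proof. by apply/eqP; rewrite -(subrr (lam 0)) -{2}(addr0 0) env_l_add addrK. Qed.
Lemma rho0 : rho 0 = 0.
Proof. by apply/eqP; rewrite -(subrr (rho 0)) -{2}(addr0 0) env_r_add addrK. Qed.
Lemma lam_sum (I : Type) (r : seq I) (F : I -> R) :
  lam (\sum_(i <- r) F i) = \sum_(i <- r) lam (F i).
Proof. exact: (big_morph lam (env_l_add Env) lam0). Qed.
Lemma rho_sum (I : Type) (r : seq I) (F : I -> R) :
  rho (\sum_(i <- r) F i) = \sum_(i <- r) rho (F i).
Proof. exact: (big_morph rho (env_r_add Env) rho0). Qed.

Lemma basis_join a b : basis (join a b) = lam (smono x a) * rho (smono x (mop b)).
Proof. by rewrite /env_basis lpart_join rpart_join. Qed.
Lemma lam_rho_smono a c : lam (smono x a) * rho (smono x c) = basis (join a (mop c)).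
Proof. by rewrite basis_join mopK. Qed.

Lemma lam_expand a : lam a = \sum_(m <- msupp (coord a)) (coord a)@_m *: lam (smono x m).
Proof. by rewrite {1}(expand P a) lam_sum; apply: eq_bigr => m _; rewrite env_l_scale. Qed.
Lemma rho_expand a : rho a = \sum_(m <- msupp (coord a)) (coord a)@_m *: rho (smono x m).
Proof. by rewrite {1}(expand P a) rho_sum; apply: eq_bigr => m _; rewrite env_r_scale. Qed.

Definition Phi (Psi : R -> R -> R) (h : E) : R :=
  lin (fun m => Psi (smono x (lpart m)) (smono x (mop (rpart m)))) (ecoord h).

Lemma PhiD Psi a b : Phi Psi (a + b) = Phi Psi a + Phi Psi b.
Proof. by rewrite /Phi ecoordD linD. Qed.
Lemma PhiZ Psi c a : Phi Psi (c *: a) = c *: Phi Psi a.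
Proof. by rewrite /Phi ecoordZ linZ. Qed.
Lemma Phi0 Psi : Phi Psi 0 = 0.
Proof. by rewrite /Phi ecoord0 lin0. Qed.
Lemma PhiN Psi a : Phi Psi (- a) = - Phi Psi a.
Proof. by rewrite /Phi ecoordN linN. Qed.
Lemma Phi_sum Psi (I : Type) (r : seq I) (Q : pred I) (F : I -> E) :
  Phi Psi (\sum_(i <- r | Q i) F i) = \sum_(i <- r | Q i) Phi Psi (F i).
Proof. exact: (big_morph (Phi Psi) (PhiD Psi) (Phi0 Psi)). Qed.
Lemma Phi_basis Psi m : Phi Psi (basis m) = Psi (smono x (lpart m)) (smono x (mop (rpart m))).
Proof. by rewrite /Phi ecoord_basis linX. Qed.

Lemma Phi_lr (Psi : R -> R -> R) a b :
  (forall u v w, Psi (u + v) w = Psi u w + Psi v w) ->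
  (forall c u w, Psi (c *: u) w = c *: Psi u w) ->
  (forall u v w, Psi w (u + v) = Psi w u + Psi w v) ->
  (forall c u w, Psi w (c *: u) = c *: Psi w u) ->
  Phi Psi (lam a * rho b) = Psi a b.
Proof.
move=> D1 Z1 D2 Z2.
have P01 : forall w, Psi 0 w = 0.
  by move=> w; apply: (@addrI _ (Psi 0 w)); rewrite -D1 !addr0.
have P02 : forall w, Psi w 0 = 0.
  by move=> w; apply: (@addrI _ (Psi w 0)); rewrite -D2 !addr0.
rewrite lam_expand rho_expand [in RHS](expand P a) [in RHS](expand P b).
rewrite mulr_suml Phi_sum (big_morph (fun u => Psi u _) (fun u v => D1 u v _) (P01 _)).
apply: eq_bigr => m1 _.
rewrite mulr_sumr Phi_sum Z1 (big_morph (fun u => Psi _ u) (fun u v => D2 u v _) (P02 _)).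
rewrite scaler_sumr; apply: eq_bigr => m2 _.
by rewrite -scalerAl -scalerAr !PhiZ lam_rho_smono Phi_basis lpart_join rpart_join mopK Z2.
Qed.

Lemma Phi_mul_lr a b : env_mul Env (lam a * rho b) = a * b.
Proof.
apply: (@Phi_lr (fun u v => u * v)).
- by move=> u v w; rewrite mulrDl.
- by move=> c u w; rewrite scalerAl.
- by move=> u v w; rewrite mulrDr.
- by move=> c u w; rewrite scalerAr.
Qed.

Lemma Phi_act_lr z a b : Phi (fun u v => u * z * v) (lam a * rho b) = a * z * b.
Proof.
apply: (@Phi_lr (fun u v => u * z * v)).
- by move=> u v w; rewrite !mulrDl.
- by move=> c u w; rewrite -!scalerAl.
- by move=> u v w; rewrite mulrDr.
- by move=> c u w; rewrite scalerAr.
Qed.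

Lemma env_mul_l a : env_mul Env (lam a) = a.
Proof. by rewrite -[lam a]mulr1 -(env_r_one Env) Phi_mul_lr mulr1. Qed.
Lemma env_mul_r a : env_mul Env (rho a) = a.
Proof. by rewrite -[rho a]mul1r -(env_l_one Env) Phi_mul_lr mul1r. Qed.

Lemma env_mulD a b : env_mul Env (a + b) = env_mul Env a + env_mul Env b.
Proof. exact: PhiD. Qed.
Lemma env_mul0 : env_mul Env 0 = 0.
Proof. exact: Phi0. Qed.

Lemma env_mul_lrw a b w : env_mul Env (lam a * rho b * w) = a * env_mul Env w * b.
Proof.
have eM : forall h, env_mul Env h = Phi (fun u v => u * v) h by [].
rewrite eM -{1}(ecoordK w) espan_lin /lin mulr_sumr Phi_sum.
rewrite /env_mul mulr_sumr mulr_suml; apply: eq_bigr => m _.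
rewrite -scalerAr (PhiZ (fun u v => u * v)) -scalerAr -scalerAl; congr (_ *: _).
rewrite /env_basis mulrA -[lam a * rho b * _]mulrA -(env_comm Env) mulrA -(env_l_mul Env).
rewrite -mulrA -(env_r_mul Env).
by rewrite -eM (Phi_mul_lr (a * smono x (lpart m))) !mulrA.
Qed.

Lemma env_actE q h (u : 'rV[R]_q) j :
  env_act Env h u 0 j = Phi (fun a b => a * u 0 j * b) h.
Proof. by rewrite /env_act summxE; apply: eq_bigr => m _; rewrite mxE. Qed.

Lemma env_act_lr q a b (u : 'rV[R]_q) : env_act Env (lam a * rho b) u = rbiact a u b.
Proof. by apply/matrixP => i j; rewrite (ord1 i) env_actE Phi_act_lr mxE. Qed.
Lemma env_actD q h1 h2 (u : 'rV[R]_q) : env_act Env (h1 + h2) u = env_act Env h1 u + env_act Env h2 u.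
Proof. by apply/matrixP => i j; rewrite (ord1 i) mxE !env_actE PhiD. Qed.
Lemma env_act0 q (u : 'rV[R]_q) : env_act Env 0 u = 0.
Proof. by apply/matrixP => i j; rewrite (ord1 i) mxE !env_actE Phi0. Qed.

Lemma Phi1 h : Phi (fun a b => a * 1 * b) h = env_mul Env h.
Proof. by rewrite /Phi /env_mul; apply: lin_ext => m _; rewrite mulr1. Qed.
Lemma Phi_z0 h : Phi (fun a b => a * 0 * b) h = 0.
Proof. by rewrite /Phi /lin big1 // => m _; rewrite mulr0 mul0r scaler0. Qed.

End EnvLem.

Definition ord0_elim {T : Type} (i : 'I_0) : T :=
  False_rect T (@Bool.diff_false_true (eq_trans (esym (ltn0 i)) (ltn_ord i))).

Lemma split_lshift' m n (i : 'I_m) : split (lshift n i) = inl i.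
Proof. exact: (unsplitK (inl i : 'I_m + 'I_n)). Qed.
Lemma split_rshift' m n (i : 'I_n) : split (rshift m i) = inr i.
Proof. exact: (unsplitK (inr i : 'I_m + 'I_n)). Qed.

Section Bispan.
Variables (A : Type) (V : zmodType) (biact : A -> V -> A -> V).
Implicit Types (G : seq V).

Lemma bispan0 G : bispan biact G 0.
Proof. by exists 0%N, ord0_elim, ord0_elim, ord0_elim; rewrite big_ord0. Qed.

Lemma bispanD G v w : bispan biact G v -> bispan biact G w -> bispan biact G (v + w).
Proof.
case=> N1 [a1 [b1 [i1 ->]]] [N2 [a2 [b2 [i2 ->]]]].
exists (N1 + N2)%N, (fun j => match split j with inl j1 => a1 j1 | inr j2 => a2 j2 end),
  (fun j => match split j with inl j1 => b1 j1 | inr j2 => b2 j2 end),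
  (fun j => match split j with inl j1 => i1 j1 | inr j2 => i2 j2 end).
by rewrite big_split_ord /=; congr (_ + _); apply: eq_bigr => j _;
  rewrite ?split_lshift' ?split_rshift'.
Qed.

Lemma bispan_gen G a g b : g \in G -> bispan biact G (biact a g b).
Proof.
move=> gG; have hi : (index g G < size G)%N by rewrite index_mem.
exists 1%N, (fun _ => a), (fun _ => b), (fun _ => Ordinal hi).
by rewrite big_ord1 /= nth_index.
Qed.

Lemma bispan_ind G (Q : V -> Prop) : Q 0 -> (forall v w, Q v -> Q w -> Q (v + w)) ->
  (forall a g b, g \in G -> Q (biact a g b)) -> forall v, bispan biact G v -> Q v.
Proof.
move=> Q0 QD Qg v [N [a [b [idx ->]]]].
apply: (big_ind Q Q0 QD) => j _; apply: Qg; exact: mem_nth.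
Qed.

Lemma bispan_sum G (I : Type) (r : seq I) (F : I -> V) :
  (forall i, bispan biact G (F i)) -> bispan biact G (\sum_(i <- r) F i).
Proof. by move=> h; apply: big_ind => //; [exact: bispan0|exact: bispanD]. Qed.

Lemma bispan_sub G1 G2 v : {subset G1 <= G2} -> bispan biact G1 v -> bispan biact G2 v.
Proof.
move=> s; apply: bispan_ind; [exact: bispan0|exact: bispanD|].
by move=> a g b /s; apply: bispan_gen.
Qed.

Lemma bispan_filter G v : (forall a b, biact a 0 b = 0) ->
  bispan biact G v <-> bispan biact [seq g <- G | g != 0] v.
Proof.
move=> h0; split; last by apply: bispan_sub => g; rewrite mem_filter => /andP[].
apply: bispan_ind; [exact: bispan0|exact: bispanD|].
move=> a g b gG; have [->|g0] := eqVneq g 0; first by rewrite h0; exact: bispan0.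
by apply: bispan_gen; rewrite mem_filter g0.
Qed.

End Bispan.

Lemma mem_map_enum (V : eqType) T (F : 'I_T -> V) g :
  g \in [seq F j | j <- enum 'I_T] <-> exists j, g = F j.
Proof.
split; first by case/mapP => j _ ->; exists j.
by case=> j ->; apply: map_f; rewrite mem_enum.
Qed.

Section RBi.
Variables (R : pzRingType) (s : nat).
Implicit Types (v w : 'rV[R]_s).

Lemma rbiact0 a b : rbiact a (0 : 'rV[R]_s) b = 0.
Proof. by apply/matrixP => i j; rewrite !mxE mulr0 mul0r. Qed.
Lemma rbiactD a v w b : rbiact a (v + w) b = rbiact a v b + rbiact a w b.
Proof. by apply/matrixP => i j; rewrite !mxE mulrDr mulrDl. Qed.
Lemma rbiactA a a' v b' b : rbiact a (rbiact a' v b') b = rbiact (a * a') v (b' * b).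
Proof. by apply/matrixP => i j; rewrite !mxE !mulrA. Qed.
Lemma rbiactN1 v : rbiact (-1) v 1 = - v.
Proof. by apply/matrixP => i j; rewrite !mxE mulr1 mulN1r. Qed.
Lemma rbiact11 v : rbiact 1 v 1 = v.
Proof. by apply/matrixP => i j; rewrite !mxE mulr1 mul1r. Qed.

Lemma bispan_rbi G v a b : bispan (@rbiact R s) G v -> bispan (@rbiact R s) G (rbiact a v b).
Proof.
move: v; apply: bispan_ind.
- by rewrite rbiact0; exact: bispan0.
- by move=> v w hv hw; rewrite rbiactD; exact: bispanD.
- by move=> a' g b' gG; rewrite rbiactA; exact: bispan_gen.
Qed.

Lemma bispanN G v : bispan (@rbiact R s) G v -> bispan (@rbiact R s) G (- v).
Proof. by move=> h; rewrite -rbiactN1; exact: bispan_rbi. Qed.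
End RBi.


Lemma mxcolE_Rank (T : Type) (r : nat) (t : 'I_r -> nat) q (B : forall i, 'M[T]_(t i, q))
   (i : 'I_r) (l : 'I_(t i)) c :
  (mxcol B) (@tagnat.Rank r t i l) c = B i l c.
Proof. by rewrite mxE /tagnat.sig1 /tagnat.sig2 /tagnat.Rank tagnat.rankK. Qed.

Lemma sum_tag (V : nmodType) (r : nat) (t : 'I_r -> nat) (F : 'I_(\sum_i t i) -> V) :
  \sum_(q < \sum_i t i) F q = \sum_(i < r) \sum_(l < t i) F (@tagnat.Rank r t i l).
Proof.
rewrite (reindex (@tagnat.rank r t)) /=; last first.
  by exists (@tagnat.sig r t) => p _; [exact: tagnat.rankK|exact: tagnat.sigK].
rewrite (sig_big_dep xpredT (fun i => xpredT) (fun i (l : 'I_(t i)) => F (@tagnat.Rank r t i l))) /=.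
by apply: eq_bigr => -[i l].
Qed.


Section Ords.
Variables (n : nat) (le : rel 'X_{1..n}).
Hypothesis adm : admissible le.
Local Notation lt := (strict le).

Lemma le0_eq a : le a 0%MM -> a = 0%MM.
Proof. by move=> h; apply: (adm_anti adm); rewrite h (adm_0 adm). Qed.

Lemma ord_star_top a a0 : le a a0 -> env_order le Ord_star (join a 0%MM) (join a0 0%MM).
Proof. by move=> h; rewrite /env_order !lpart_join !rpart_join /strict eqxx andbF /= h. Qed.
Lemma ord_c_top a a0 : le a a0 -> env_order le Ord_c (join a 0%MM) (join a0 0%MM).
Proof.
move=> h; rewrite /env_order !lpart_join !rpart_join mop0 !addm0 /strict h /=.
by case: eqP => //=; rewrite (adm_refl adm).
Qed.
Lemma ord_lstar_top a a0 : le a a0 -> env_order le Ord_lstar (join 0%MM (mop a)) (join 0%MM (mop a0)).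
Proof. by move=> h; rewrite /env_order !lpart_join !rpart_join /strict eqxx andbF /= /le_op !mopK h. Qed.
Lemma ord_lc_top a a0 : le a a0 -> env_order le Ord_lc (join 0%MM (mop a)) (join 0%MM (mop a0)).
Proof.
move=> h; rewrite /env_order !lpart_join !rpart_join !mopK !add0m /strict h /=.
by case: eqP => //=; rewrite (adm_refl adm).
Qed.

Local Notation sm m := (lpart m + mop (rpart m))%MM.

Lemma ord_star_d M0 m : rpart M0 = 0%MM -> env_order le Ord_star m M0 -> m != M0 -> lt (sm m) (sm M0).
Proof.
move=> hM0; rewrite /env_order hM0 => /orP [/andP [h1 h2] | /andP [/eqP e h]] nm.
  by move: h2; rewrite /le_op mop0 in h1; rewrite (mop_eq0 (le0_eq h1)) eqxx.
rewrite e mop0 !addm0 /strict h /=; apply/eqP => el; move/eqP: nm; apply.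
by apply: parts_inj; rewrite ?e ?hM0.
Qed.
Lemma ord_c_d M0 m : rpart M0 = 0%MM -> env_order le Ord_c m M0 -> m != M0 -> lt (sm m) (sm M0).
Proof.
move=> hM0; rewrite /env_order /= => /orP [h | /andP [/eqP e h]] nm //.
move: h e; rewrite hM0 mop0 => /le0_eq /mop_eq0 eb; rewrite eb mop0 !addm0 => el.
by move/eqP: nm; case; apply: parts_inj; rewrite ?eb.
Qed.
Lemma ord_lstar_d M0 m : lpart M0 = 0%MM -> env_order le Ord_lstar m M0 -> m != M0 -> lt (sm m) (sm M0).
Proof.
move=> hM0; rewrite /env_order hM0 => /orP [/andP [h1 h2] | /andP [/eqP e h]] nm.
  by move: h2; rewrite (le0_eq h1) eqxx.
rewrite e !add0m; apply/andP; split; first exact: h.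
apply/eqP => el; move/eqP: nm; apply.
by apply: parts_inj; rewrite ?e ?hM0 // (mop_inj el).
Qed.
Lemma ord_lc_d M0 m : lpart M0 = 0%MM -> env_order le Ord_lc m M0 -> m != M0 -> lt (sm m) (sm M0).
Proof.
move=> hM0; rewrite /env_order /= => /orP [h | /andP [/eqP e h]] nm //.
move: h e; rewrite hM0 => /le0_eq el; rewrite el !add0m => /mop_inj er.
by move/eqP: nm; case; apply: parts_inj; rewrite ?el.
Qed.

End Ords.

Section CoefTop.
Variables (k : fieldType) (n N : nat) (top : 'X_{1..n} -> 'X_{1..N}).
Hypothesis top_inj : injective top.

Lemma coef_top_sum (p : {mpoly k[n]}) m :
  (\sum_(a <- msupp p) p@_a *: 'X_[top a])@_m = \sum_(a <- msupp p) p@_a * (top a == m)%:R.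
Proof.
rewrite (big_morph (mcoeff m) (@mcoeffD _ _ m) (@mcoeff0 _ _ m)).
by apply: eq_bigr => a _; rewrite mcoeffZ mcoeffX.
Qed.

Lemma coef_top (p : {mpoly k[n]}) b :
  (\sum_(a <- msupp p) p@_a *: 'X_[top a])@_(top b) = p@_b.
Proof.
rewrite coef_top_sum {3}(mpolyE p) (big_morph (mcoeff b) (@mcoeffD _ _ b) (@mcoeff0 _ _ b)).
by apply: eq_bigr => a _; rewrite mcoeffZ mcoeffX (inj_eq top_inj).
Qed.

Lemma coef_top_supp (p : {mpoly k[n]}) m :
  (\sum_(a <- msupp p) p@_a *: 'X_[top a])@_m != 0 -> exists a, m = top a /\ p@_a != 0.
Proof.
rewrite coef_top_sum => h; apply: NNPP => H; move: h; rewrite big1_seq ?eqxx // => a _.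
case: eqP => [e|]; last by rewrite mulr0.
have [->|//] := eqVneq p@_a 0; first by rewrite mul0r.
by move=> pa; exfalso; apply: H; exists a.
Qed.
End CoefTop.

Section Main.
Variables (k : fieldType) (R : algType k) (n : nat) (P : PBW R n).
Variables (E : algType k) (Env : Envelope P E).
Variables (s r : nat) (t : 'I_r -> nat) (f : forall i : 'I_r, 'I_(t i) -> 'rV[R]_s).
Local Notation x := (pbw_x P).
Local Notation coord := (pbw_coord P).
Local Notation lam := (env_l Env).
Local Notation rho := (env_r Env).
Local Notation ecoord := (env_coord Env).
Local Notation emul := (env_mul Env).
Local Notation Rk := (@tagnat.Rank r t).
Local Notation PhiA z := (Phi Env (fun a b => a * z * b)).

Lemma SyzE (h : 'rV[E]_(s + \sum_i t i)) : Syz Env (H_mat f) h <->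
  forall (i : 'I_r) (j : 'I_s),
  emul (h 0 (lshift _ j)) + \sum_(l < t i) PhiA (@f i l 0 j) (h 0 (rshift s (Rk i l))) = 0.
Proof.
have E1 : forall i j, (\sum_(q < s + \sum_i t i) env_act Env (h 0 q) (row q (H_mat f))) 0 (mxvec_index i j)
   = emul (h 0 (lshift _ j)) + \sum_(l < t i) PhiA (@f i l 0 j) (h 0 (rshift s (Rk i l))).
  move=> i j; rewrite summxE big_split_ord /=; congr (_ + _).
    rewrite (bigD1 j) //= [X in _ + X = _]big1 ?addr0.
      by rewrite env_actE mxE col_mxEu mxE mxvecE mxE eqxx Phi1.
    move=> j' nj; rewrite env_actE mxE col_mxEu mxE mxvecE mxE.
    by rewrite eq_sym (negbTE nj) Phi_z0.
  rewrite sum_tag (bigD1 i) //= [X in _ + X = _]big1 ?addr0.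
    apply: eq_bigr => l _.
    by rewrite env_actE mxE col_mxEd mxcolE_Rank mxE mxvecE mxE eqxx.
  move=> i' ni; apply: big1 => l _.
  rewrite env_actE mxE col_mxEd mxcolE_Rank mxE mxvecE mxE.
  by rewrite eq_sym (negbTE ni) Phi_z0.
rewrite /Syz; split.
  by move=> h0 i j; rewrite -E1 h0 mxE.
move=> hall; apply/rowP => c; rewrite mxE.
by case/mxvec_indexP: c => i j; rewrite E1 hall.
Qed.

Lemma sigRank (T : Type) (G : forall i, 'I_(t i) -> T) i (l : 'I_(t i)) :
  G (tagnat.sig1 (Rk i l)) (tagnat.sig2 (Rk i l)) = G i l.
Proof. by rewrite /tagnat.sig1 /tagnat.sig2 /tagnat.Rank tagnat.rankK. Qed.

Local Notation F i := [seq @f i l | l <- enum 'I_(t i)].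

Lemma env_act_bispan q (G : seq 'rV[R]_q) h u : u \in G -> bispan (@rbiact R q) G (env_act Env h u).
Proof.
move=> uG.
have -> : env_act Env h u = \sum_(m <- msupp (ecoord h))
   rbiact ((ecoord h)@_m *: smono x (lpart m)) u (smono x (mop (rpart m))).
  apply/matrixP => i j; rewrite (ord1 i) env_actE summxE /Phi /lin; apply: eq_bigr => m _.
  by rewrite /rbiact mxE -!scalerAl.
by apply: bispan_sum => m; apply: bispan_gen.
Qed.

Lemma inter_act i w : bispan (@rbiact R s) (F i) w ->
  exists c : 'I_(t i) -> E, w = \sum_(l < t i) env_act Env (c l) (@f i l).
Proof.
move: w; apply: bispan_ind.
- by exists (fun _ => 0); rewrite big1 // => l _; rewrite env_act0.
- move=> v w [c1 ->] [c2 ->]; exists (fun l => c1 l + c2 l).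
  by rewrite -big_split; apply: eq_bigr => l _; rewrite env_actD.
move=> a g b /mem_map_enum [l0 ->].
exists (fun l => if l == l0 then lam a * rho b else 0).
rewrite (bigD1 l0) //= eqxx [X in _ = _ + X]big1 ?addr0 ?env_act_lr //.
by move=> l /negbTE ->; rewrite env_act0.
Qed.

Lemma lift_exists (L : R -> E) (hL : forall a, emul (L a) = a) (v : 'rV[R]_s) :
  (forall i, bispan (@rbiact R s) (F i) v) ->
  exists h, Syz Env (H_mat f) h /\ forall j, h 0 (lshift _ j) = L (v 0 j).
Proof.
move=> hv.
have [C HC] : exists C : forall i, 'I_(t i) -> E, forall i,
    v = \sum_(l < t i) env_act Env (C i l) (@f i l).
  apply: (@fin_all_exists _ (fun i => 'I_(t i) -> E)
    (fun i (c : 'I_(t i) -> E) => v = \sum_(l < t i) env_act Env (c l) (@f i l))) => i.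
  exact: inter_act.
pose h : 'rV[E]_(s + \sum_i t i) := \row_q
  match split q with inl j => L (v 0 j) | inr q' => - C (tagnat.sig1 q') (tagnat.sig2 q') end.
have hl : forall j, h 0 (lshift _ j) = L (v 0 j) by move=> j; rewrite mxE split_lshift'.
exists h; split=> //; apply/SyzE => i j.
rewrite hl hL.
have hr : forall i l, h 0 (rshift s (Rk i l)) = - C i l.
  by move=> i' l; rewrite mxE split_rshift' (sigRank (fun i l => C i l)).
rewrite (eq_bigr (fun l => - PhiA (@f i l 0 j) (C i l))); last by move=> l _; rewrite hr PhiN.
rewrite sumrN {1}(HC i) summxE; apply/eqP; rewrite subr_eq0; apply/eqP.
by apply: eq_bigr => l _; rewrite env_actE.
Qed.

Lemma env_mul_vec0 m : env_mul_vec Env (0 : 'rV[E]_m) = 0.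
Proof. by apply/matrixP => i j; rewrite !mxE env_mul0. Qed.

Section Part1.
Variables (T : nat) (g : 'I_T -> 'rV[E]_(s + \sum_i t i)).
Hypothesis hS : forall h, Syz Env (H_mat f) h <-> bispan (env_biact Env) [seq g j | j <- enum 'I_T] h.
Local Notation G' := [seq env_mul_vec Env (lsubmx (g j)) | j <- enum 'I_T].

Lemma g_syz j : Syz Env (H_mat f) (g j).
Proof.
apply/hS; rewrite -[g j]scale1r -[1 : E]mulr1 -{1}(env_l_one Env) -(env_r_one Env).
by apply: bispan_gen; apply/mem_map_enum; exists j.
Qed.

Lemma syz_to_G' h : bispan (env_biact Env) [seq g j | j <- enum 'I_T] h ->
  bispan (@rbiact R s) G' (env_mul_vec Env (lsubmx h)).
Proof.
move: h; apply: bispan_ind.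
- by rewrite linear0 env_mul_vec0; exact: bispan0.
- move=> u w hu hw; rewrite linearD.
  have -> : env_mul_vec Env (lsubmx u + lsubmx w) = env_mul_vec Env (lsubmx u) + env_mul_vec Env (lsubmx w).
    by apply/matrixP => i j; rewrite !mxE env_mulD.
  exact: bispanD.
move=> a g0 b /mem_map_enum [j ->].
have -> : env_mul_vec Env (lsubmx (env_biact Env a (g j) b)) = rbiact a (env_mul_vec Env (lsubmx (g j))) b.
  by apply/matrixP => i l; rewrite !mxE env_mul_lrw.
by apply: bispan_gen; apply/mem_map_enum; exists j.
Qed.

Lemma G'_inter j i : bispan (@rbiact R s) (F i) (env_mul_vec Env (lsubmx (g j))).
Proof.
have := g_syz j => /SyzE hj.
have -> : env_mul_vec Env (lsubmx (g j)) =
   - \sum_(l < t i) env_act Env (g j 0 (rshift s (Rk i l))) (@f i l).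
  apply/matrixP => i0 c; rewrite (ord1 i0) !mxE summxE.
  apply/eqP; rewrite -addr_eq0; apply/eqP; rewrite -[RHS](hj i c).
  by congr (_ + _); apply: eq_bigr => l _; rewrite env_actE.
apply: bispanN; apply: bispan_sum => l; apply: env_act_bispan.
by apply/mem_map_enum; exists l.
Qed.

Theorem part1 v : (forall i, bispan (@rbiact R s) (F i) v) <-> bispan (@rbiact R s) G' v.
Proof.
split.
  move=> hv; have [h [hs hl]] := lift_exists (@env_mul_l _ _ _ _ _ Env) hv.
  have -> : v = env_mul_vec Env (lsubmx h).
    by apply/matrixP => i j; rewrite (ord1 i) !mxE hl env_mul_l.
  by apply: syz_to_G'; apply/hS.
move: v; apply: bispan_ind.
- by move=> i; exact: bispan0.
- by move=> v w hv hw i; apply: bispanD.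
move=> a g0 b /mem_map_enum [j ->] i.
by apply: bispan_rbi; apply: G'_inter.
Qed.

Local Notation le := (pbw_le P).
Local Notation sm m := (lpart m + mop (rpart m))%MM.
Local Notation Inter := (fun v : 'rV[R]_s => forall i : 'I_r, bispan (@rbiact R s) (F i) v).

Lemma Inter_G' j : Inter (env_mul_vec Env (lsubmx (g j))).
Proof. by move=> i; apply: G'_inter. Qed.

Lemma zero_coefs (A : pzRingType) N (cd : A -> {mpoly k[N]}) (cdK : forall a, cd a = 0 -> a = 0)
   (lo : rel 'X_{1..N}) q (w : 'rV[A]_q) e0 (i : 'I_q) :
  is_exp cd lo w e0 -> (i < e0.2)%N -> w 0 i = 0.
Proof.
case=> _ h2 ij; apply: cdK; apply/mpolyP => m; rewrite mcoeff0.
apply/eqP; apply: NNPP => /negP hm; move: (h2 (m, i) hm); rewrite /pot_le /=.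
by rewrite ltnNge (ltnW ij) /=; case: eqP => // ei; move: ij; rewrite ei ltnn.
Qed.

Lemma part2_bwd e : in_exp_cone coord le [seq v <- G' | v != 0] e -> Exp coord le Inter e.
Proof.
case: e => a0 j0 [w win [[a' j] [[hw1 hw2] [/= e2 [c /= e1]]]]].
subst j0 a0.
have wG : w \in G' by move: win; rewrite mem_filter => /andP[].
have wI : Inter w by case/mem_map_enum: wG => j' ->; exact: Inter_G'.
pose v := rbiact (smono x c) w 1.
have hlead : lead P (c + a')%MM (v 0 j).
  rewrite mxE mulr1; apply: lead_mulL; split => // m hm.
  move: (hw2 (m, j)); rewrite /vcoef /= -mcoeff_msupp => /(_ hm).
  by rewrite /pot_le /= ltnn eqxx.
have vz : forall i : 'I_s, (i < j)%N -> v 0 i = 0.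
  move=> i ij; rewrite mxE (zero_coefs (@coord_eq0 _ _ _ P) (conj hw1 hw2)) //.
  by rewrite mulr0 mul0r.
have hexp : is_exp coord le v (a' + c, j)%MM.
  split; first by rewrite /vcoef /= addmC; case: hlead.
  case=> m i; rewrite /vcoef /pot_le /= => hm.
  case: (ltngtP i j) => [ij|ji|ij].
  - by move: hm; rewrite vz // coord0 mcoeff0 eqxx.
  - by [].
  - have eij : i = j by apply: val_inj.
    subst i; rewrite eqxx /= addmC; case: hlead => _; apply.
    by rewrite mcoeff_msupp.
exists v; split => //.
- by move=> i; apply: bispan_rbi; exact: wI.
- by apply/eqP => ev; case: hexp; rewrite ev /vcoef mxE coord0 mcoeff0 eqxx.
Qed.

Lemma part2_fwd o (L : R -> E) (top : 'X_{1..n} -> 'X_{1..n + n}) :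
  (forall a, emul (L a) = a) ->
  (forall a, ecoord (L a) = \sum_(al <- msupp (coord a)) (coord a)@_al *: 'X_[top al]) ->
  injective top ->
  (forall a a0, le a a0 -> env_order le o (top a) (top a0)) ->
  (forall a0 M0 C, top a0 = (M0 + C)%MM -> (exists c', a0 = (sm M0 + c')%MM) /\
       forall m, env_order le o m M0 -> m != M0 -> strict le (sm m) (sm M0)) ->
  left_GB ecoord (env_order le o) (Syz Env (H_mat f)) [seq g j | j <- enum 'I_T] ->
  forall e, Exp coord le Inter e -> in_exp_cone coord le [seq v <- G' | v != 0] e.
Proof.
move=> hL hLc tinj hb hcd [_ _ hExp] [a0 j] [v [hv v0 [ve0 vall]]].
have [h [hs hl]] := lift_exists hL hv.
pose eh := (top a0, lshift (\sum_i t i) j).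
have coefh : forall q m, vcoef ecoord h (m, q) != 0 -> pot_le (env_order le o) (m, q) eh.
  move=> q m; rewrite /vcoef /=.
  rewrite -(splitK q); case: (split q) => [i|q'] /=.
    rewrite hl hLc => /coef_top_supp [a [-> ha]].
    have := vall (a, i) ha; rewrite /pot_le /= => /orP [ji | /andP [/eqP ij hle]].
      by rewrite ji.
    by rewrite ij eqxx (hb _ _ hle) orbT.
  by move=> _; rewrite /pot_le /=; apply/orP; left; apply: leq_trans (ltn_ord j) (leq_addr _ _).
have hexp : is_exp ecoord (env_order le o) h eh.
  split; last by case=> m q; apply: coefh.
  by rewrite /vcoef /= hl hLc (coef_top tinj).
have h0 : h != 0.
  by apply/eqP => ez; move: hexp => [+ _]; rewrite ez /vcoef mxE ecoord0 mcoeff0 eqxx.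
have : Exp ecoord (env_order le o) (Syz Env (H_mat f)) eh by exists h.
move/hExp => [gk gkin [[M0 qk] [[hk1 hk2] [/= e2 [C /= e1]]]]].
case/mem_map_enum: gkin => k0 egk; subst gk qk.
have [[c' ec'] hd] := hcd _ _ _ e1.
pose w := env_mul_vec Env (lsubmx (g k0)).
pose Pg := ecoord (g k0 0 (lshift (\sum_i t i) j)).
have lead_w : lead P (sm M0) (w 0 j).
  rewrite /w !mxE.
  have -> : emul (g k0 0 (lshift _ j)) = \sum_(m <- msupp Pg) Pg@_m *:
        (smono x (lpart m) * smono x (mop (rpart m))) by [].
  have M0in : M0 \in msupp Pg by rewrite mcoeff_msupp.
  rewrite (bigD1_seq M0) ?msupp_uniq //=.
  apply: lead_add; first by apply: leadZ => //; exact: pbw_mul.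
  rewrite big_seq_cond; apply: Lt_sum => m /andP [mi nm]; apply: LtZ.
  have om : env_order le o m M0.
    move: (hk2 (m, lshift _ j)); rewrite /vcoef /= -/Pg -mcoeff_msupp => /(_ mi).
    by rewrite /pot_le /= ltnn eqxx.
  by apply: Le_Lt (hd m om nm); case: (pbw_mul P (lpart m) (mop (rpart m))).
have wz : forall i : 'I_s, (i < j)%N -> w 0 i = 0.
  move=> i ij; rewrite /w !mxE.
  have -> : g k0 0 (lshift _ i) = 0.
    by apply: (zero_coefs (@ecoord_eq0 _ _ _ _ _ Env) (conj hk1 hk2)).
  exact: env_mul0.
have wexp : is_exp coord le w (sm M0, j).
  split; first by case: lead_w.
  case=> m i; rewrite /vcoef /pot_le /= => hm.
  case: (ltngtP i j) => [ij|ji|ij].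
  - by move: hm; rewrite wz // coord0 mcoeff0 eqxx.
  - by [].
  - have eij : i = j by apply: val_inj.
    subst i; rewrite eqxx /=; case: lead_w => _; apply.
    by rewrite mcoeff_msupp.
have w0 : w != 0.
  by apply/eqP => ez; case: wexp; rewrite ez /vcoef mxE coord0 mcoeff0 eqxx.
exists w; first by rewrite mem_filter w0 /=; apply/mem_map_enum; exists k0.
by exists (sm M0, j); split => //; split => //; exists c'.
Qed.

End Part1.

Lemma ecoord_lam a : ecoord (lam a) =
  \sum_(al <- msupp (coord a)) (coord a)@_al *: 'X_[join al 0%MM].
Proof.
rewrite lam_expand ecoord_sum; apply: eq_bigr => al _; rewrite ecoordZ; congr (_ *: _).
by rewrite -(ecoord_basis Env) basis_join mop0 (smono0 P) (env_r_one Env) mulr1.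
Qed.
Lemma ecoord_rho a : ecoord (rho a) =
  \sum_(al <- msupp (coord a)) (coord a)@_al *: 'X_[join 0%MM (mop al)].
Proof.
rewrite rho_expand ecoord_sum; apply: eq_bigr => al _; rewrite ecoordZ; congr (_ *: _).
by rewrite -(ecoord_basis Env) basis_join mopK (smono0 P) (env_l_one Env) mul1r.
Qed.
Lemma topl_inj : injective (fun a : 'X_{1..n} => join a 0%MM).
Proof. by move=> a b /join_inj []. Qed.
Lemma topr_inj : injective (fun a : 'X_{1..n} => join 0%MM (mop a)).
Proof. by move=> a b /join_inj [] _ /mop_inj. Qed.

Local Notation sm m := (lpart m + mop (rpart m))%MM.

Lemma hcd_left a0 (M0 C : 'X_{1..n + n}) : join a0 0%MM = (M0 + C)%MM ->
  rpart M0 = 0%MM /\ exists c', a0 = (sm M0 + c')%MM.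
Proof.
move=> e.
have hr : rpart M0 = 0%MM.
  have := congr1 (@rpart n) e; rewrite rpart_join rpartD => /esym/eqP.
  by rewrite mnmD_eq0 => /andP [/eqP -> _].
split=> //; exists (lpart C).
by have := congr1 (@lpart n) e; rewrite lpart_join lpartD hr mop0 addm0.
Qed.
Lemma hcd_right a0 (M0 C : 'X_{1..n + n}) : join 0%MM (mop a0) = (M0 + C)%MM ->
  lpart M0 = 0%MM /\ exists c', a0 = (sm M0 + c')%MM.
Proof.
move=> e.
have hl : lpart M0 = 0%MM.
  have := congr1 (@lpart n) e; rewrite lpart_join lpartD => /esym/eqP.
  by rewrite mnmD_eq0 => /andP [/eqP -> _].
split=> //; exists (mop (rpart C)).
have := congr1 (@rpart n) e; rewrite rpart_join rpartD hl add0m => e2.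
by rewrite -[a0]mopK e2 mopD.
Qed.

End Main.

Unset Implicit Arguments.

Theorem mainTheorem9 (k : fieldType) (R : algType k) (n : nat) (P : PBW R n)
  (E : algType k) (Env : Envelope P E)
  (s r : nat) (t : 'I_r -> nat) (f : forall i : 'I_r, 'I_(t i) -> 'rV[R]_s)
  (T : nat) (g : 'I_T -> 'rV[E]_(s + \sum_i t i)) :
  (forall h, Syz Env (H_mat f) h <-> bispan (env_biact Env) [seq g j | j <- enum 'I_T] h) ->
  let Inter := fun v : 'rV[R]_s =>
    forall i : 'I_r, bispan (@rbiact R s) [seq @f i l | l <- enum 'I_(t i)] v in
  let G' := [seq env_mul_vec Env (lsubmx (g j)) | j <- enum 'I_T] in
  (forall v, Inter v <-> bispan (@rbiact R s) G' v) /\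
  (forall o : env_order_kind,
     left_GB (env_coord Env) (env_order (pbw_le P) o) (Syz Env (H_mat f))
             [seq g j | j <- enum 'I_T] ->
     twosided_GB (pbw_coord P) (pbw_le P) (@rbiact R s) Inter
                 [seq v <- G' | v != 0]).
Proof.
move=> hS Inter G'; split; first by move=> v; exact: part1.
have adm := pbw_admissible P.
move=> o hGB; split.
- move=> w; rewrite mem_filter => /andP [w0 wG]; split => //.
  by case/mem_map_enum: wG => j -> i; exact: G'_inter.
- move=> v; apply: (iff_trans (part1 hS v)); exact: (bispan_filter _ _ (@rbiact0 R s)).
- move=> e; split; last exact: part2_bwd.
  case: o hGB => hGB.
  + apply: (part2_fwd (g := g) (o := Ord_star) (L := env_l Env) (top := (fun a => join a 0%MM))) => //.
    * exact: env_mul_l.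
    * exact: ecoord_lam.
    * exact: topl_inj.
    * by move=> a a0; apply: ord_star_top.
    * move=> a0 M0 C /hcd_left [hr hc]; split=> // m; exact: ord_star_d.
  + apply: (part2_fwd (g := g) (o := Ord_c) (L := env_l Env) (top := (fun a => join a 0%MM))) => //.
    * exact: env_mul_l.
    * exact: ecoord_lam.
    * exact: topl_inj.
    * by move=> a a0; apply: ord_c_top.
    * move=> a0 M0 C /hcd_left [hr hc]; split=> // m; exact: ord_c_d.
  + apply: (part2_fwd (g := g) (o := Ord_lstar) (L := env_r Env) (top := (fun a => join 0%MM (mop a)))) => //.
    * exact: env_mul_r.
    * exact: ecoord_rho.
    * exact: topr_inj.
    * by move=> a a0; apply: ord_lstar_top.
    * move=> a0 M0 C /hcd_right [hr hc]; split=> // m; exact: ord_lstar_d.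
  + apply: (part2_fwd (g := g) (o := Ord_lc) (L := env_r Env) (top := (fun a => join 0%MM (mop a)))) => //.
    * exact: env_mul_r.
    * exact: ecoord_rho.
    * exact: topr_inj.
    * by move=> a a0; apply: ord_lc_top.
    * move=> a0 M0 C /hcd_right [hr hc]; split=> // m; exact: ord_lc_d.
Qed.
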